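(* Suppose $a_0,\ldots,a_4\in\mathbb{Z}$ satisfy $\gcd(a_0,\ldots,a_4)=1$ and that $(-3)\Delta(a_0,\ldots,a_4)\neq 0$ is a perfect square in $\mathbb{Q}$. Then (a) $a_0,\ldots,a_4$ all have the same sign; and (b) for every prime number $p\equiv 2\pmod 3$, all the $p$-adic valuations $\nu_p(a_0),\ldots,\nu_p(a_4)$ are even.
   Context: The discriminant is the polynomial $$\Delta(a_0,\ldots,a_4):=\prod_{i_1,\ldots,i_4\in\{0,1\}}\Big(\sqrt{a_1a_2a_3a_4}+(-1)^{i_1}\sqrt{a_0a_2a_3a_4}+(-1)^{i_2}\sqrt{a_0a_1a_3a_4}+(-1)^{i_3}\sqrt{a_0a_1a_2a_4}+(-1)^{i_4}\sqrt{a_0a_1a_2a_3}\Big)\in\mathbb{Q}[a_0,\ldots,a_4]$$ (a symmetric form of degree $32$; it is the discriminant of the cubic surface $a_0X_0^3+\cdots+a_4X_4^3=0$, $X_0+\cdots+X_4=0$). *)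

(* Defs.v *)
From HB Require Import structures.
From mathcomp Require Import all_boot all_order all_algebra all_field.
Set Implicit Arguments. Unset Strict Implicit. Unset Printing Implicit Defensive.
Import Order.TTheory GRing.Theory Num.Theory.
Local Open Scope ring_scope.

Definition sgn (b : bool) : algC := (-1) ^+ b.

Definition sq (x : int) : algC := sqrtC (x%:~R).

(* The discriminant Delta(a0,...,a4), defined literally as the product over
   (i1,i2,i3,i4) in {0,1}^4.  The value does not depend on the choice of
   square roots (flipping sqrt(a0a2a3a4),... permutes the factors; flipping
   sqrt(a1a2a3a4) negates all 16 factors). *)
Definition Delta (a0 a1 a2 a3 a4 : int) : algC :=
  \prod_(e : bool * bool * bool * bool)
    (let: (i1, i2, i3, i4) := e in
       sq (a1 * a2 * a3 * a4)
     + sgn i1 * sq (a0 * a2 * a3 * a4)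
     + sgn i2 * sq (a0 * a1 * a3 * a4)
     + sgn i3 * sq (a0 * a1 * a2 * a4)
     + sgn i4 * sq (a0 * a1 * a2 * a3)).

(* Main.v *)
Require Import Defs.
From HB Require Import structures.
From mathcomp Require Import all_boot all_order all_algebra all_field.
From mathcomp Require Import ring zify.
Set Implicit Arguments. Unset Strict Implicit. Unset Printing Implicit Defensive.
Import Order.TTheory GRing.Theory Num.Theory.
Local Open Scope ring_scope.

Definition L (R : comNzRingType) (s0 s1 s2 s3 s4 : R) (i1 i2 i3 i4 : bool) : R :=
  s0 + (-1) ^+ i1 * s1 + (-1) ^+ i2 * s2 + (-1) ^+ i3 * s3 + (-1) ^+ i4 * s4.
Arguments L : simpl never.
Definition alpha (R : comNzRingType) (x0 x1 x2 x3 x4 : R) : R :=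
  x4^+4 - 4%:R*x3*x4^+3 + 6%:R*x3^+2*x4^+2 - 4%:R*x3^+3*x4 + x3^+4 - 4%:R*x2*x4^+3 + 4%:R*x2*x3*x4^+2 + 4%:R*x2*x3^+2*x4 - 4%:R*x2*x3^+3 + 6%:R*x2^+2*x4^+2 + 4%:R*x2^+2*x3*x4 + 6%:R*x2^+2*x3^+2 - 4%:R*x2^+3*x4 - 4%:R*x2^+3*x3 + x2^+4 - 4%:R*x1*x4^+3 + 4%:R*x1*x3*x4^+2 + 4%:R*x1*x3^+2*x4 - 4%:R*x1*x3^+3 + 4%:R*x1*x2*x4^+2 - 40%:R*x1*x2*x3*x4 + 4%:R*x1*x2*x3^+2 + 4%:R*x1*x2^+2*x4 + 4%:R*x1*x2^+2*x3 - 4%:R*x1*x2^+3 + 6%:R*x1^+2*x4^+2 + 4%:R*x1^+2*x3*x4 + 6%:R*x1^+2*x3^+2 + 4%:R*x1^+2*x2*x4 + 4%:R*x1^+2*x2*x3 + 6%:R*x1^+2*x2^+2 - 4%:R*x1^+3*x4 - 4%:R*x1^+3*x3 - 4%:R*x1^+3*x2 + x1^+4 - 4%:R*x0*x4^+3 + 4%:R*x0*x3*x4^+2 + 4%:R*x0*x3^+2*x4 - 4%:R*x0*x3^+3 + 4%:R*x0*x2*x4^+2 - 40%:R*x0*x2*x3*x4 + 4%:R*x0*x2*x3^+2 + 4%:R*x0*x2^+2*x4 + 4%:R*x0*x2^+2*x3 - 4%:R*x0*x2^+3 + 36%:R*x0*x1*x4^+2 + 24%:R*x0*x1*x3*x4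 + 36%:R*x0*x1*x3^+2 + 24%:R*x0*x1*x2*x4 + 24%:R*x0*x1*x2*x3 + 36%:R*x0*x1*x2^+2 - 60%:R*x0*x1^+2*x4 - 60%:R*x0*x1^+2*x3 - 60%:R*x0*x1^+2*x2 + 28%:R*x0*x1^+3 + 6%:R*x0^+2*x4^+2 + 4%:R*x0^+2*x3*x4 + 6%:R*x0^+2*x3^+2 + 4%:R*x0^+2*x2*x4 + 4%:R*x0^+2*x2*x3 + 6%:R*x0^+2*x2^+2 - 60%:R*x0^+2*x1*x4 - 60%:R*x0^+2*x1*x3 - 60%:R*x0^+2*x1*x2 + 70%:R*x0^+2*x1^+2 - 4%:R*x0^+3*x4 - 4%:R*x0^+3*x3 - 4%:R*x0^+3*x2 + 28%:R*x0^+3*x1 + x0^+4.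
Definition beta (R : comNzRingType) (x0 x1 x2 x3 x4 : R) : R :=
  - 8%:R*x4^+3 + 8%:R*x3*x4^+2 + 8%:R*x3^+2*x4 - 8%:R*x3^+3 + 8%:R*x2*x4^+2 - 80%:R*x2*x3*x4 + 8%:R*x2*x3^+2 + 8%:R*x2^+2*x4 + 8%:R*x2^+2*x3 - 8%:R*x2^+3 + 24%:R*x1*x4^+2 + 16%:R*x1*x3*x4 + 24%:R*x1*x3^+2 + 16%:R*x1*x2*x4 + 16%:R*x1*x2*x3 + 24%:R*x1*x2^+2 - 24%:R*x1^+2*x4 - 24%:R*x1^+2*x3 - 24%:R*x1^+2*x2 + 8%:R*x1^+3 + 24%:R*x0*x4^+2 + 16%:R*x0*x3*x4 + 24%:R*x0*x3^+2 + 16%:R*x0*x2*x4 + 16%:R*x0*x2*x3 + 24%:R*x0*x2^+2 - 80%:R*x0*x1*x4 - 80%:R*x0*x1*x3 - 80%:R*x0*x1*x2 + 56%:R*x0*x1^+2 - 24%:R*x0^+2*x4 - 24%:R*x0^+2*x3 - 24%:R*x0^+2*x2 + 56%:R*x0^+2*x1 + 8%:R*x0^+3.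

Lemma p8p1 (R : comNzRingType) (s0 s1 s2 s3 s4 : R) :
  (L s0 s1 s2 s3 s4 false true true true * L s0 s1 s2 s3 s4 false true true false * L s0 s1 s2 s3 s4 false true false true * L s0 s1 s2 s3 s4 false true false false * L s0 s1 s2 s3 s4 false false true true * L s0 s1 s2 s3 s4 false false true false * L s0 s1 s2 s3 s4 false false false true * L s0 s1 s2 s3 s4 false false false false) = alpha (s0^+2) (s1^+2) (s2^+2) (s3^+2) (s4^+2) + beta (s0^+2) (s1^+2) (s2^+2) (s3^+2) (s4^+2) * s0 * s1.
Proof. rewrite /L /alpha /beta /= ?expr0 ?expr1; ring. Qed.

Lemma p8m1 (R : comNzRingType) (s0 s1 s2 s3 s4 : R) :
  (L s0 s1 s2 s3 s4 true true true true * L s0 s1 s2 s3 s4 true true true false * L s0 s1 s2 s3 s4 true true false true * L s0 s1 s2 s3 s4 true true false false * L s0 s1 s2 s3 s4 true false true true * L s0 s1 s2 s3 s4 true false true false * L s0 s1 s2 s3 s4 true false false true * L s0 s1 s2 s3 s4 true false false false) = alpha (s0^+2) (s1^+2) (s2^+2) (s3^+2) (s4^+2) - beta (s0^+2) (s1^+2) (s2^+2) (s3^+2) (s4^+2) * s0 * s1.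
Proof. rewrite /L /alpha /beta /= ?expr0 ?expr1; ring. Qed.

Lemma key1 (R : comNzRingType) (s0 s1 s2 s3 s4 : R) :
  \prod_(i1 : bool) \prod_(i2 : bool) \prod_(i3 : bool) \prod_(i4 : bool) L s0 s1 s2 s3 s4 i1 i2 i3 i4
  = (alpha (s0^+2) (s1^+2) (s2^+2) (s3^+2) (s4^+2) + beta (s0^+2) (s1^+2) (s2^+2) (s3^+2) (s4^+2) * s0 * s1) * (alpha (s0^+2) (s1^+2) (s2^+2) (s3^+2) (s4^+2) - beta (s0^+2) (s1^+2) (s2^+2) (s3^+2) (s4^+2) * s0 * s1).
Proof.
rewrite -p8p1 -p8m1 ; repeat (rewrite big_bool /=).
ring.
Qed.

Lemma p8p2 (R : comNzRingType) (s0 s1 s2 s3 s4 : R) :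
  (L s0 s1 s2 s3 s4 true false true true * L s0 s1 s2 s3 s4 true false true false * L s0 s1 s2 s3 s4 true false false true * L s0 s1 s2 s3 s4 true false false false * L s0 s1 s2 s3 s4 false false true true * L s0 s1 s2 s3 s4 false false true false * L s0 s1 s2 s3 s4 false false false true * L s0 s1 s2 s3 s4 false false false false) = alpha (s0^+2) (s2^+2) (s1^+2) (s3^+2) (s4^+2) + beta (s0^+2) (s2^+2) (s1^+2) (s3^+2) (s4^+2) * s0 * s2.
Proof. rewrite /L /alpha /beta /= ?expr0 ?expr1; ring. Qed.

Lemma p8m2 (R : comNzRingType) (s0 s1 s2 s3 s4 : R) :
  (L s0 s1 s2 s3 s4 true true true true * L s0 s1 s2 s3 s4 true true true false * L s0 s1 s2 s3 s4 true true false true * L s0 s1 s2 s3 s4 true true false false * L s0 s1 s2 s3 s4 false true true true * L s0 s1 s2 s3 s4 false true true false * L s0 s1 s2 s3 s4 false true false true * L s0 s1 s2 s3 s4 false true false false) = alpha (s0^+2) (s2^+2) (s1^+2) (s3^+2) (s4^+2) - beta (s0^+2) (s2^+2) (s1^+2) (s3^+2) (s4^+2) * s0 * s2.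
Proof. rewrite /L /alpha /beta /= ?expr0 ?expr1; ring. Qed.

Lemma key2 (R : comNzRingType) (s0 s1 s2 s3 s4 : R) :
  \prod_(i1 : bool) \prod_(i2 : bool) \prod_(i3 : bool) \prod_(i4 : bool) L s0 s1 s2 s3 s4 i1 i2 i3 i4
  = (alpha (s0^+2) (s2^+2) (s1^+2) (s3^+2) (s4^+2) + beta (s0^+2) (s2^+2) (s1^+2) (s3^+2) (s4^+2) * s0 * s2) * (alpha (s0^+2) (s2^+2) (s1^+2) (s3^+2) (s4^+2) - beta (s0^+2) (s2^+2) (s1^+2) (s3^+2) (s4^+2) * s0 * s2).
Proof.
rewrite -p8p2 -p8m2 ; repeat (rewrite big_bool /=).
ring.
Qed.

Lemma p8p3 (R : comNzRingType) (s0 s1 s2 s3 s4 : R) :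
  (L s0 s1 s2 s3 s4 true true false true * L s0 s1 s2 s3 s4 true true false false * L s0 s1 s2 s3 s4 true false false true * L s0 s1 s2 s3 s4 true false false false * L s0 s1 s2 s3 s4 false true false true * L s0 s1 s2 s3 s4 false true false false * L s0 s1 s2 s3 s4 false false false true * L s0 s1 s2 s3 s4 false false false false) = alpha (s0^+2) (s3^+2) (s1^+2) (s2^+2) (s4^+2) + beta (s0^+2) (s3^+2) (s1^+2) (s2^+2) (s4^+2) * s0 * s3.
Proof. rewrite /L /alpha /beta /= ?expr0 ?expr1; ring. Qed.

Lemma p8m3 (R : comNzRingType) (s0 s1 s2 s3 s4 : R) :
  (L s0 s1 s2 s3 s4 true true true true * L s0 s1 s2 s3 s4 true true true false * L s0 s1 s2 s3 s4 true false true true * L s0 s1 s2 s3 s4 true false true false * L s0 s1 s2 s3 s4 false true true true * L s0 s1 s2 s3 s4 false true true false * L s0 s1 s2 s3 s4 false false true true * L s0 s1 s2 s3 s4 false false true false) = alpha (s0^+2) (s3^+2) (s1^+2) (s2^+2) (s4^+2) - beta (s0^+2) (s3^+2) (s1^+2) (s2^+2) (s4^+2) * s0 * s3.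
Proof. rewrite /L /alpha /beta /= ?expr0 ?expr1; ring. Qed.

Lemma key3 (R : comNzRingType) (s0 s1 s2 s3 s4 : R) :
  \prod_(i1 : bool) \prod_(i2 : bool) \prod_(i3 : bool) \prod_(i4 : bool) L s0 s1 s2 s3 s4 i1 i2 i3 i4
  = (alpha (s0^+2) (s3^+2) (s1^+2) (s2^+2) (s4^+2) + beta (s0^+2) (s3^+2) (s1^+2) (s2^+2) (s4^+2) * s0 * s3) * (alpha (s0^+2) (s3^+2) (s1^+2) (s2^+2) (s4^+2) - beta (s0^+2) (s3^+2) (s1^+2) (s2^+2) (s4^+2) * s0 * s3).
Proof.
rewrite -p8p3 -p8m3 ; repeat (rewrite big_bool /=).
ring.
Qed.

Lemma p8p4 (R : comNzRingType) (s0 s1 s2 s3 s4 : R) :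
  (L s0 s1 s2 s3 s4 true true true false * L s0 s1 s2 s3 s4 true true false false * L s0 s1 s2 s3 s4 true false true false * L s0 s1 s2 s3 s4 true false false false * L s0 s1 s2 s3 s4 false true true false * L s0 s1 s2 s3 s4 false true false false * L s0 s1 s2 s3 s4 false false true false * L s0 s1 s2 s3 s4 false false false false) = alpha (s0^+2) (s4^+2) (s1^+2) (s2^+2) (s3^+2) + beta (s0^+2) (s4^+2) (s1^+2) (s2^+2) (s3^+2) * s0 * s4.
Proof. rewrite /L /alpha /beta /= ?expr0 ?expr1; ring. Qed.

Lemma p8m4 (R : comNzRingType) (s0 s1 s2 s3 s4 : R) :
  (L s0 s1 s2 s3 s4 true true true true * L s0 s1 s2 s3 s4 true true false true * L s0 s1 s2 s3 s4 true false true true * L s0 s1 s2 s3 s4 true false false true * L s0 s1 s2 s3 s4 false true true true * L s0 s1 s2 s3 s4 false true false true * L s0 s1 s2 s3 s4 false false true true * L s0 s1 s2 s3 s4 false false false true) = alpha (s0^+2) (s4^+2) (s1^+2) (s2^+2) (s3^+2) - beta (s0^+2) (s4^+2) (s1^+2) (s2^+2) (s3^+2) * s0 * s4.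
Proof. rewrite /L /alpha /beta /= ?expr0 ?expr1; ring. Qed.

Lemma key4 (R : comNzRingType) (s0 s1 s2 s3 s4 : R) :
  \prod_(i1 : bool) \prod_(i2 : bool) \prod_(i3 : bool) \prod_(i4 : bool) L s0 s1 s2 s3 s4 i1 i2 i3 i4
  = (alpha (s0^+2) (s4^+2) (s1^+2) (s2^+2) (s3^+2) + beta (s0^+2) (s4^+2) (s1^+2) (s2^+2) (s3^+2) * s0 * s4) * (alpha (s0^+2) (s4^+2) (s1^+2) (s2^+2) (s3^+2) - beta (s0^+2) (s4^+2) (s1^+2) (s2^+2) (s3^+2) * s0 * s4).
Proof.
rewrite -p8p4 -p8m4 ; repeat (rewrite big_bool /=).
ring.
Qed.

Lemma alpha_intr (x0 x1 x2 x3 x4 : int) :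
  (alpha x0 x1 x2 x3 x4)%:~R = alpha (x0%:~R : algC) x1%:~R x2%:~R x3%:~R x4%:~R.
Proof. rewrite /alpha. ring. Qed.
Lemma beta_intr (x0 x1 x2 x3 x4 : int) :
  (beta x0 x1 x2 x3 x4)%:~R = beta (x0%:~R : algC) x1%:~R x2%:~R x3%:~R x4%:~R.
Proof. rewrite /beta. ring. Qed.

Lemma fold_norm (s0 s1 y2 y3 y4 : algC) (u0 u1 u2 u3 u4 : int) :
  s0 ^+ 2 = u0%:~R -> s1 ^+ 2 = u1%:~R -> y2 = u2%:~R -> y3 = u3%:~R -> y4 = u4%:~R ->
  (alpha (s0^+2) (s1^+2) y2 y3 y4 + beta (s0^+2) (s1^+2) y2 y3 y4 * s0 * s1) *
  (alpha (s0^+2) (s1^+2) y2 y3 y4 - beta (s0^+2) (s1^+2) y2 y3 y4 * s0 * s1)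
  = ((alpha u0 u1 u2 u3 u4) ^+ 2 - (beta u0 u1 u2 u3 u4) ^+ 2 * (u0 * u1))%:~R.
Proof.
move=> h0 h1 -> -> ->.
have -> : forall a b : algC, (a + b * s0 * s1) * (a - b * s0 * s1) = a ^+ 2 - b ^+ 2 * (s0 ^+ 2 * s1 ^+ 2).
  by move=> a b; ring.
rewrite h0 h1 -alpha_intr -beta_intr.
move: (alpha u0 u1 u2 u3 u4) (beta u0 u1 u2 u3 u4) => A B.
ring.
Qed.
Lemma Delta_prod a0 a1 a2 a3 a4 : Delta a0 a1 a2 a3 a4 =
  \prod_(i1 : bool) \prod_(i2 : bool) \prod_(i3 : bool) \prod_(i4 : bool)
    L (sq (a1 * a2 * a3 * a4)) (sq (a0 * a2 * a3 * a4)) (sq (a0 * a1 * a3 * a4))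
      (sq (a0 * a1 * a2 * a4)) (sq (a0 * a1 * a2 * a3)) i1 i2 i3 i4.
Proof.
rewrite /Delta.
rewrite (pair_bigA _ (fun i1 i2 => \prod_(i3 : bool) \prod_(i4 : bool) L (sq (a1 * a2 * a3 * a4)) (sq (a0 * a2 * a3 * a4)) (sq (a0 * a1 * a3 * a4))
      (sq (a0 * a1 * a2 * a4)) (sq (a0 * a1 * a2 * a3)) i1 i2 i3 i4)) /=.
rewrite (pair_bigA _ (fun i12 i3 => \prod_(i4 : bool) L (sq (a1 * a2 * a3 * a4)) (sq (a0 * a2 * a3 * a4)) (sq (a0 * a1 * a3 * a4))
      (sq (a0 * a1 * a2 * a4)) (sq (a0 * a1 * a2 * a3)) i12.1 i12.2 i3 i4)) /=.
rewrite (pair_bigA _ (fun i123 i4 => L (sq (a1 * a2 * a3 * a4)) (sq (a0 * a2 * a3 * a4)) (sq (a0 * a1 * a3 * a4))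
      (sq (a0 * a1 * a2 * a4)) (sq (a0 * a1 * a2 * a3)) i123.1.1 i123.1.2 i123.2 i4)) /=.
apply: eq_bigr => -[[[i1 i2] i3] i4] _ /=.
by [].
Qed.

Local Close Scope ring_scope.
Lemma m3_nonres (p X Z : nat) : prime p -> p %% 3 = 2 ->
  p %| X ^ 2 + 3 * Z ^ 2 -> ~~ (p %| Z) -> p = 2.
Proof.
Local Open Scope ring_scope.
move=> pp p3 hd hz; apply/eqP; apply: contraT => p2.
have chF := pchar_Fp pp.
have p1 := prime_gt1 pp.
pose x : 'F_p := X%:R; pose z : 'F_p := Z%:R.
have z0 : z != 0 by rewrite /z -(dvdn_pcharf chF).
have e : x ^+ 2 + 3%:R * z ^+ 2 = 0.
  by apply/eqP; move: hd; rewrite (dvdn_pcharf chF) natrD natrM !natrX.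
have two0 : (2%:R : 'F_p) != 0.
  rewrite -(dvdn_pcharf chF); apply/negP => /dvdn_leq h.
  have := h isT; move: p2 => /eqP; lia.
have three0 : (3%:R : 'F_p) != 0.
  rewrite -(dvdn_pcharf chF); apply/negP => /dvdn_leq h.
  have := h isT; move: p2 => /eqP; lia.
pose w := (x / z - 1) / 2%:R.
have hw : w ^+ 2 + w + 1 = 0.
  have -> : w ^+ 2 + w + 1 = (x ^+ 2 + 3%:R * z ^+ 2) / (4%:R * z ^+ 2).
    have four : (4%:R : 'F_p) = 2%:R * 2%:R by rewrite -natrM.
    rewrite /w four; field.
    apply/and3P; split => //; by rewrite four mulf_neq0.
  have hw' : forall t : 'F_p, t = 0 -> t / (4%:R * z ^+ 2) = 0 by move=> t ->; rewrite mul0r.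
  exact: hw' _ e.
have w3 : w ^+ 3 = 1.
  apply/eqP; rewrite -subr_eq0.
  have -> : w ^+ 3 - 1 = (w - 1) * (w ^+ 2 + w + 1) by ring.
  by rewrite hw mulr0.
have wp := expf_card w; rewrite card_Fp // in wp.
have w2 : w ^+ 2 = w.
  have e3 : forall k, w ^+ (k * 3 + 2) = w ^+ 2.
    by move=> k; rewrite exprD mulnC exprM w3 expr1n mul1r.
  have hp : ((p %/ 3) * 3 + 2)%N = p by lia.
  by have := e3 (p %/ 3)%N; rewrite hp wp => <-.
have : w * (w - 1) = 0 by rewrite mulrBr mulr1 -expr2 w2 subrr.
move/eqP; rewrite mulf_eq0 => /orP[] /eqP hw0.
  by move: hw; rewrite hw0 expr0n /= !add0r => /eqP; rewrite oner_eq0.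
have w1 : w = 1 by apply/eqP; rewrite -subr_eq0 hw0.
have h3 : (3%:R : 'F_p) = w ^+ 2 + w + 1 by rewrite w1; ring.
by move: three0; rewrite h3 hw eqxx.
Qed.
Local Close Scope ring_scope.
Lemma descent (p : nat) : prime p -> p %% 3 = 2 -> forall n X Z Y d,
  Z <= n -> 0 < Z -> odd (logn p d) -> X ^ 2 + 3 * Z ^ 2 = d * Y ^ 2 -> False.
Proof.
move=> pp p3; elim=> [|n IH] X Z Y d hZn hZ hd e; first by lia.
have p1 := prime_gt1 pp.
have d0 : 0 < d by case: d hd {e} => //; rewrite logn0.
have pd : p %| d.
  by move: (odd_gt0 hd); rewrite logn_gt0 mem_primes => /and3P[].
have Z2 : 0 < Z ^ 2 by rewrite expn_gt0 hZ.
have Y0 : 0 < Y.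
  rewrite lt0n; apply/eqP => Y0; move: e; rewrite Y0; lia.
have hX : p %| X ^ 2 + 3 * Z ^ 2 by rewrite e dvdn_mulr.
case pZ: (p %| Z).
  have pX : p %| X.
    have pZ2 : p %| 3 * Z ^ 2 by rewrite dvdn_mull // dvdn_exp.
    by move: hX; rewrite dvdn_addl // Euclid_dvdX // => /andP[].
  case/dvdnP: pX => X1 eX; case/dvdnP: pZ => Z1 eZ.
  have Z1p : 0 < Z1 by move: hZ; rewrite eZ muln_gt0 => /andP[].
  have Z1lt : Z1 <= n.
    have : Z1 * 2 <= Z1 * p by rewrite leq_mul2l p1 orbT.
    lia.
  have e1 : p ^ 2 * (X1 ^ 2 + 3 * Z1 ^ 2) = d * Y ^ 2.
    by rewrite -e eX eZ; ring.
  have p2pos : 0 < p ^ 2 by rewrite expn_gt0 (ltnW p1).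
  case p2d: (p ^ 2 %| d).
    case/dvdnP: p2d => d1 ed.
    have d1p : 0 < d1 by move: d0; rewrite ed muln_gt0 => /andP[].
    apply: (IH X1 Z1 Y d1) => //.
      move: hd; rewrite ed lognM // pfactorK //.
      by rewrite addn2 /=; case: (odd _).
    apply/eqP; rewrite -(eqn_pmul2l p2pos); apply/eqP.
    by rewrite e1 ed; ring.
  case/dvdnP: pd => d1 ed.
  have pd1 : ~~ (p %| d1).
    apply/negP => /dvdnP[d2 ed2]; move/negP: p2d; apply.
    by rewrite ed ed2; apply/dvdnP; exists d2; ring.
  have ppos : 0 < p by lia.
  have e2 : p * (X1 ^ 2 + 3 * Z1 ^ 2) = d1 * Y ^ 2.
    apply/eqP; rewrite -(eqn_pmul2l ppos); apply/eqP.
    by rewrite mulnA mulnn e1 ed; ring.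
  have pY : p %| Y.
    have : p %| d1 * Y ^ 2 by rewrite -e2 dvdn_mulr.
    by rewrite Euclid_dvdM // (negPf pd1) /= Euclid_dvdX // => /andP[].
  case/dvdnP: pY => Y1 eY.
  apply: (IH X1 Z1 Y1 d) => //.
  apply/eqP; rewrite -(eqn_pmul2l ppos); apply/eqP.
  by rewrite e2 eY ed; ring.
have p2 : p = 2.
  apply: (m3_nonres pp p3 hX); exact: negbT.
subst p.
have oZ : odd Z by move: pZ; rewrite dvdn2 => /negbFE.
have oX : odd X.
  move: hX; rewrite dvdn2 oddD oddM !oddX /= oZ.
  by case: (odd X).
have [a ea] : exists a, X = a.*2.+1.
  by exists X./2; rewrite -{1}(odd_double_half X) oX add1n.
have [b eb] : exists b, Z = b.*2.+1.
  by exists Z./2; rewrite -{1}(odd_double_half Z) oZ add1n.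
have ek : X ^ 2 + 3 * Z ^ 2 = 4 * (a * a.+1 + 3 * (b * b.+1) + 1).
  rewrite ea eb -!muln2; ring.
have ok : odd (a * a.+1 + 3 * (b * b.+1) + 1).
  by rewrite !oddD !oddM /=; case: (odd a); case: (odd b).
have : logn 2 (d * Y ^ 2) = 2.
  rewrite -e ek.
  rewrite lognM; last by rewrite addn1.
  have -> : logn 2 4 = 2 by rewrite (_ : 4 = 2 ^ 2) // pfactorK.
  rewrite logn_coprime ?coprime2n //.
  by [].
rewrite lognM ?expn_gt0 ?Y0 // lognX => h.
have : logn 2 d = 0 \/ logn 2 d = 2 by lia.
by case=> hl; move: hd; rewrite hl.
Qed.

Local Open Scope ring_scope.
Lemma sq_nat (x : int) : x ^+ 2 = (`|x| ^ 2)%N :> int.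
Proof. by rewrite -abszX gez0_abs ?sqr_ge0. Qed.

Lemma sq2 (x : int) : (`|x|%N)%:Z * (`|x|%N)%:Z = x * x.
Proof. by rewrite -PoszM -abszM gez0_abs // -expr2 sqr_ge0. Qed.

Lemma core (a0 aj A B c T : int) (D : algC) (q : rat) (p : nat) :
  D = (A ^+ 2 - B ^+ 2 * T)%:~R -> T = c ^+ 2 * (a0 * aj) ->
  (-3) * D != 0 -> (-3) * D = ratr q ^+ 2 ->
  0 < a0 * aj /\ (prime p -> (p %% 3 = 2)%N -> ~~ odd (logn p `|a0 * aj|)).
Proof.
move=> hD hT hnz hq.
have hq2 : q ^+ 2 = ((-3) * (A ^+ 2 - B ^+ 2 * T))%:~R.
  apply: (fmorph_inj (@ratr algC)).
  rewrite rmorphXn rmorph_int -hq hD; ring.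
have E3 : (-3) * (A ^+ 2 - B ^+ 2 * T) != 0.
  have h : (-3) * D = ((-3) * (A ^+ 2 - B ^+ 2 * T))%:~R by rewrite hD; ring.
  by rewrite h intr_eq0 in hnz.
have pos : 0 < a0 * aj.
  rewrite ltNge; apply/negP => hle.
  have hE : 0 <= A ^+ 2 - B ^+ 2 * T.
    rewrite subr_ge0 hT (le_trans _ (sqr_ge0 A)) //.
    by rewrite mulr_ge0_le0 ?sqr_ge0 // mulr_ge0_le0 ?sqr_ge0.
  have := sqr_ge0 q; rewrite hq2 ler0z => h.
  move: E3 h hE; set E := (A ^+ 2 - B ^+ 2 * T); lia.
split=> // pp p3.
pose n := numq q; pose m := denq q.
have eq_int : n ^+ 2 = (-3) * (A ^+ 2 - B ^+ 2 * T) * m ^+ 2.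
  apply: (@intr_inj rat).
  have m0 : (m%:~R : rat) != 0 by rewrite intr_eq0 denq_neq0.
  have hqm : q * m%:~R = n%:~R by rewrite -(divq_num_den q) divfK.
  transitivity ((n%:~R : rat) ^+ 2); first ring.
  rewrite -hqm exprMn hq2; ring.
have eqI : (3 * A * m) ^+ 2 + 3 * n ^+ 2 = (a0 * aj) * (3 * B * c * m) ^+ 2.
  have h2 : 3 * n ^+ 2 = 3 * ((-3) * (A ^+ 2 - B ^+ 2 * T) * m ^+ 2) by rewrite eq_int.
  rewrite h2 hT; ring.
have q0 : q != 0.
  apply: contraNneq E3 => q0; move: hq2; rewrite q0 expr0n /= => /esym /eqP.
  by rewrite intr_eq0.
have Zpos : (0 < `|n|)%N by rewrite absz_gt0 numq_eq0.
apply/negP => hodd.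
apply: (descent pp p3 (leqnn `|n|) Zpos hodd (X := `|3 * A * m|) (Y := `|3 * B * c * m|)).
apply/eqP; rewrite -eqz_nat; apply/eqP.
rewrite PoszD !PoszM !sq2 gtz0_abs //.
Qed.

Lemma Delta1 (a0 a1 a2 a3 a4 : int) : exists A B : int,
  Delta a0 a1 a2 a3 a4 = (A ^+ 2 - B ^+ 2 * ((a1 * a2 * a3 * a4) * (a0 * a2 * a3 * a4)))%:~R.
Proof.
rewrite Delta_prod key1; do 2 eexists; apply: fold_norm; exact: sqrtCK.
Qed.

Lemma Delta2 (a0 a1 a2 a3 a4 : int) : exists A B : int,
  Delta a0 a1 a2 a3 a4 = (A ^+ 2 - B ^+ 2 * ((a1 * a2 * a3 * a4) * (a0 * a1 * a3 * a4)))%:~R.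
Proof.
rewrite Delta_prod key2; do 2 eexists; apply: fold_norm; exact: sqrtCK.
Qed.

Lemma Delta3 (a0 a1 a2 a3 a4 : int) : exists A B : int,
  Delta a0 a1 a2 a3 a4 = (A ^+ 2 - B ^+ 2 * ((a1 * a2 * a3 * a4) * (a0 * a1 * a2 * a4)))%:~R.
Proof.
rewrite Delta_prod key3; do 2 eexists; apply: fold_norm; exact: sqrtCK.
Qed.

Lemma Delta4 (a0 a1 a2 a3 a4 : int) : exists A B : int,
  Delta a0 a1 a2 a3 a4 = (A ^+ 2 - B ^+ 2 * ((a1 * a2 * a3 * a4) * (a0 * a1 * a2 * a3)))%:~R.
Proof.
rewrite Delta_prod key4; do 2 eexists; apply: fold_norm; exact: sqrtCK.
Qed.

Lemma odd_dvd (p n : nat) : odd (logn p n) -> (p %| n)%N.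
Proof. by move/odd_gt0; rewrite logn_gt0 mem_primes => /and3P[]. Qed.

Lemma nz_of_pos (x y : int) : 0 < x * y -> x != 0 /\ y != 0.
Proof.
move=> h; split; apply/eqP => e; move: h; rewrite e ?mul0r ?mulr0 ltxx //.
Qed.

Unset Implicit Arguments.

Theorem mainTheorem5 (a0 a1 a2 a3 a4 : int) :
  gcdz a0 (gcdz a1 (gcdz a2 (gcdz a3 a4))) = 1 ->
  (-3) * Delta a0 a1 a2 a3 a4 != 0 ->
  (exists q : rat, (-3) * Delta a0 a1 a2 a3 a4 = (ratr q) ^+ 2) ->
  (((0 < a0) /\ (0 < a1) /\ (0 < a2) /\ (0 < a3) /\ (0 < a4)) \/
   ((a0 < 0) /\ (a1 < 0) /\ (a2 < 0) /\ (a3 < 0) /\ (a4 < 0))) /\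
  (forall p : nat, prime p -> (p %% 3 = 2)%N ->
     [/\ ~~ odd (logn p `|a0|), ~~ odd (logn p `|a1|), ~~ odd (logn p `|a2|),
         ~~ odd (logn p `|a3|) & ~~ odd (logn p `|a4|)]).
Proof.
move=> hg hnz [q hq].
have [A1 [B1 h1]] := Delta1 a0 a1 a2 a3 a4.
have [A2 [B2 h2]] := Delta2 a0 a1 a2 a3 a4.
have [A3 [B3 h3]] := Delta3 a0 a1 a2 a3 a4.
have [A4 [B4 h4]] := Delta4 a0 a1 a2 a3 a4.
have K1 p := @core a0 a1 A1 B1 (a2 * a3 * a4) _ _ q p h1 ltac:(ring) hnz hq.
have K2 p := @core a0 a2 A2 B2 (a1 * a3 * a4) _ _ q p h2 ltac:(ring) hnz hq.
have K3 p := @core a0 a3 A3 B3 (a1 * a2 * a4) _ _ q p h3 ltac:(ring) hnz hq.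
have K4 p := @core a0 a4 A4 B4 (a1 * a2 * a3) _ _ q p h4 ltac:(ring) hnz hq.
have P1 := (K1 0%N).1; have P2 := (K2 0%N).1; have P3 := (K3 0%N).1; have P4 := (K4 0%N).1.
have [n0 n1] := nz_of_pos P1.
have [_ n2] := nz_of_pos P2.
have [_ n3] := nz_of_pos P3.
have [_ n4] := nz_of_pos P4.
split.
  case: (ltrgtP a0 0) => ha0.
  - right; move: P1 P2 P3 P4; rewrite !nmulr_rgt0 //.
  - left; move: P1 P2 P3 P4; rewrite !pmulr_rgt0 //.
  - by move/eqP: n0; rewrite ha0.
move=> p pp p3.
have L1 := (K1 p).2 pp p3; have L2 := (K2 p).2 pp p3.
have L3 := (K3 p).2 pp p3; have L4 := (K4 p).2 pp p3.
rewrite abszM lognM ?absz_gt0 // oddD in L1.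
rewrite abszM lognM ?absz_gt0 // oddD in L2.
rewrite abszM lognM ?absz_gt0 // oddD in L3.
rewrite abszM lognM ?absz_gt0 // oddD in L4.
have hg' : gcdn `|a0| (gcdn `|a1| (gcdn `|a2| (gcdn `|a3| `|a4|))) = 1%N.
  by move: hg; rewrite /gcdz; case.
have ndiv : ~~ (p %| gcdn `|a0| (gcdn `|a1| (gcdn `|a2| (gcdn `|a3| `|a4|))))%N.
  by rewrite hg' dvdn1 neq_ltn prime_gt1 ?orbT.
rewrite !dvdn_gcd in ndiv.
have G : ~~ [&& odd (logn p `|a0|), odd (logn p `|a1|), odd (logn p `|a2|),
              odd (logn p `|a3|) & odd (logn p `|a4|)].
  apply/negP => /and5P[q0 q1 q2 q3 q4]; move/negP: ndiv; apply.
  by rewrite (odd_dvd q0) (odd_dvd q1) (odd_dvd q2) (odd_dvd q3) (odd_dvd q4).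
move: G L1 L2 L3 L4.
case: (odd (logn p `|a0|)); case: (odd (logn p `|a1|)); case: (odd (logn p `|a2|));
  case: (odd (logn p `|a3|)); case: (odd (logn p `|a4|)); by [].
Qed.
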